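(* The weighted greedy algorithm w-HHL is an $O(\sqrt n\log n)$-approximation algorithm for HL: on every input graph with $n$ vertices, the hub labeling it outputs has total size at most $O(\sqrt n\log n)$ times the minimum total size of a hub labeling of that graph.
   Context: Input: a directed graph $G=(V,E)$, $n=|V|$, with nonnegative arc lengths and no zero-length cycles. A hub labeling (HL) assigns to each $v$ a forward label $L_f(v)\subseteq V$ and backward label $L_b(v)\subseteq V$ such that for every ordered pair $(u,w)$ with $w$ reachable from $u$, $L_f(u)\cap L_b(w)$ contains a vertex on some shortest $u$–$w$ path; its size is $\sum_v(|L_f(v)|+|L_b(v)|)$. (Undirected graphs: $L_f=L_b=L$, unordered pairs, size $\sum_v|L(v)|$.) w-HHL: start with empty labels; $U$ is the set of uncovered pairs. For each not-yet-selected vertex $v$, the center graph $G_v$ is the bipartite graph with two copies $X,Y$ of $V$ and an arc $(u,w)$ for each $(u,w)\in U$ having a shortest $u$–$w$ path through $v$, with isolated vertices deleted (undirected case: graph on $V$ with an edge, possibly a loop, for each such uncovered unordered pair, isolated vertices deleted). In each iteration w-HHL selects a not-yet-selected $v$ whose center graph has maximum density (number of edges divided by number of non-isolated vertices; ties arbitrary) and adds $v$ to $L_f(u)$ for each vertex $u\in X$ and $L_b(w)$ for each $w\in Y$ of that center graph (undirected: to $L(u)$ for each of its vertices $u$), until all pairs are covered. *)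

(* Defs.v *)
From HB Require Import structures.
From mathcomp Require Import all_boot all_order all_algebra.
From mathcomp Require Import boolp reals exp.
Set Implicit Arguments. Unset Strict Implicit. Unset Printing Implicit Defensive.
Import Order.TTheory GRing.Theory Num.Theory.
Local Open Scope ring_scope.

Section HubLabeling.
Variables (R : realType) (V : finType) (E : rel V) (len : V -> V -> R).

(** Walks: [p] is a walk from [u] to [w] along arcs of [E]; its vertices are
    [u :: p]; its length is the sum of the arc lengths. *)
Definition walk (u w : V) (p : seq V) : bool := path E u p && (last u p == w).
Definition walk_len (u : V) (p : seq V) : R :=
  \sum_(e <- zip (u :: p) p) len e.1 e.2.
Definition reachable (u w : V) : bool := connect E u w.
Definition shortest_walk (u w : V) (p : seq V) : Prop :=
  walk u w p /\ forall q, walk u w q -> walk_len u p <= walk_len u q.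
Definition on_shortest (u w v : V) : Prop :=
  exists p, shortest_walk u w p /\ v \in u :: p.

Definition cycle_len (c : seq V) : R := \sum_(e <- zip c (rot 1 c)) len e.1 e.2.

Definition directed_ok : Prop :=
  (forall u w, E u w -> 0 <= len u w) /\
  (forall c : seq V, c != [::] -> cycle E c -> 0 < cycle_len c).

Definition undirected_ok : Prop :=
  symmetric E /\ irreflexive E /\ (forall u w, len u w = len w u) /\
  (forall u w, E u w -> 0 <= len u w) /\
  (forall c : seq V, (3 <= size c)%N -> uniq c -> cycle E c -> 0 < cycle_len c).

Definition dcovered (Lf Lb : V -> {set V}) (u w : V) : Prop :=
  exists h, [/\ h \in Lf u, h \in Lb w & on_shortest u w h].
Definition is_dHL (Lf Lb : V -> {set V}) : Prop :=
  forall u w, reachable u w -> dcovered Lf Lb u w.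
Definition dHL_size (Lf Lb : V -> {set V}) : nat :=
  \sum_(v : V) (#|Lf v| + #|Lb v|)%N.

Definition d_uncovered (Lf Lb : V -> {set V}) : {set V * V} :=
  [set p | reachable p.1 p.2 && ~~ `[< dcovered Lf Lb p.1 p.2 >]].
(** Center graph G_v: arcs, and the non-isolated vertices of the copies X, Y. *)
Definition dcg_arcs Lf Lb (v : V) : {set V * V} :=
  [set p in d_uncovered Lf Lb | `[< on_shortest p.1 p.2 v >]].
Definition dcg_X Lf Lb v : {set V} := [set p.1 | p in dcg_arcs Lf Lb v].
Definition dcg_Y Lf Lb v : {set V} := [set p.2 | p in dcg_arcs Lf Lb v].
Definition dcg_density Lf Lb v : R :=
  (#|dcg_arcs Lf Lb v|)%:R / (#|dcg_X Lf Lb v| + #|dcg_Y Lf Lb v|)%:R.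

Record dstate := DState {
  d_sel : {set V}; d_Lf : V -> {set V}; d_Lb : V -> {set V} }.

Definition d_init : dstate := DState set0 (fun _ => set0) (fun _ => set0).

Definition d_step (s s' : dstate) : Prop :=
  d_uncovered (d_Lf s) (d_Lb s) != set0 /\
  exists v, [/\ v \notin d_sel s,
    (forall v', v' \notin d_sel s ->
        dcg_density (d_Lf s) (d_Lb s) v' <= dcg_density (d_Lf s) (d_Lb s) v),
    d_sel s' = v |: d_sel s,
    (forall u, d_Lf s' u =
        if u \in dcg_X (d_Lf s) (d_Lb s) v then v |: d_Lf s u else d_Lf s u) &
    (forall w, d_Lb s' w =
        if w \in dcg_Y (d_Lf s) (d_Lb s) v then v |: d_Lb s w else d_Lb s w)].

Inductive d_reach : dstate -> Prop :=
  | d_reach0 : d_reach d_init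
  | d_reachS s s' : d_reach s -> d_step s s' -> d_reach s'.

Definition whhl_output (Lf Lb : V -> {set V}) : Prop :=
  exists S, d_reach (DState S Lf Lb) /\ d_uncovered Lf Lb = set0.

Definition ucovered (L : V -> {set V}) (u w : V) : Prop :=
  exists h, [/\ h \in L u, h \in L w & on_shortest u w h].
Definition is_uHL (L : V -> {set V}) : Prop :=
  forall u w, reachable u w -> ucovered L u w.
Definition uHL_size (L : V -> {set V}) : nat := \sum_(v : V) #|L v|.

(** Uncovered unordered pairs {u, w} (possibly u = w), as sets [set u; w]. *)
Definition u_uncovered (L : V -> {set V}) : {set {set V}} :=
  [set e : {set V} | `[< exists u w, [/\ e = [set u; w], reachable u w &
                                         ~ ucovered L u w] >]].
Definition ucg_edges L (v : V) : {set {set V}} :=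
  [set e in u_uncovered L |
     `[< exists u w, e = [set u; w] /\ on_shortest u w v >]].
Definition ucg_verts L v : {set V} := \bigcup_(e in ucg_edges L v) e.
Definition ucg_density L v : R :=
  (#|ucg_edges L v|)%:R / (#|ucg_verts L v|)%:R.

Record ustate := UState { u_sel : {set V}; u_L : V -> {set V} }.
Definition u_init : ustate := UState set0 (fun _ => set0).

Definition u_step (s s' : ustate) : Prop :=
  u_uncovered (u_L s) != set0 /\
  exists v, [/\ v \notin u_sel s,
    (forall v', v' \notin u_sel s ->
        ucg_density (u_L s) v' <= ucg_density (u_L s) v),
    u_sel s' = v |: u_sel s &
    (forall u, u_L s' u =
        if u \in ucg_verts (u_L s) v then v |: u_L s u else u_L s u)].

Inductive u_reach : ustate -> Prop :=
  | u_reach0 : u_reach u_init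
  | u_reachS s s' : u_reach s -> u_step s s' -> u_reach s'.

Definition whhl_output_u (L : V -> {set V}) : Prop :=
  exists S, u_reach (UState S L) /\ u_uncovered L = set0.

End HubLabeling.

(* Main.v *)
Require Import Defs.
From HB Require Import structures.
From mathcomp Require Import all_boot all_order all_algebra.
From mathcomp Require Import boolp reals exp.
From mathcomp Require Import ring lra.
Import Order.TTheory GRing.Theory Num.Theory.
Local Open Scope ring_scope.


Section Real.
Variable R : realType.

Definition phi (m : nat) : R := if m == 0%N then 0 else ln (m%:R) + 1.

Lemma phi_ge0 m : 0 <= phi m.
Proof.
rewrite /phi; case: eqP => [_|/eqP m0]; first exact: lexx.
have := @ln_ge0 R m%:R.
rewrite ler1n lt0n m0 => /(_ isT) H; lra.
Qed.

Lemma phi_mono m m' : (m' <= m)%N -> phi m' <= phi m.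
Proof.
move=> le; rewrite {1}/phi; case: (m' =P 0%N) => [_|/eqP m0].
  exact: phi_ge0.
have m0' : m != 0%N by apply: contra m0 => /eqP e; move: le; rewrite e leqn0.
rewrite /phi (negbTE m0') lerD2r ler_ln; first by rewrite ler_nat.
  by rewrite posrE ltr0n lt0n.
by rewrite posrE ltr0n lt0n.
Qed.

Lemma phi_step (m a : nat) : (0 < m)%N -> (a <= m)%N ->
  a%:R / m%:R <= phi m - phi (m - a).
Proof.
move=> m0 am; rewrite /phi (negbTE (lt0n_neq0 m0)).
have mR : 0 < (m%:R : R) by rewrite ltr0n.
have mR0 : (m%:R : R) != 0 by rewrite pnatr_eq0 -lt0n.
case: (ltnP a m) => [lt|ge].
  have ma0 : (m - a != 0)%N by rewrite subn_eq0 -ltnNge.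
  rewrite (negbTE ma0).
  have h := @le_ln1Dx R (- (a%:R / m%:R)).
  have e : 1 + - (a%:R / m%:R) = (m - a)%:R / (m%:R : R).
    by rewrite natrB; [rewrite mulrBl divff | exact: ltnW].
  rewrite e ln_div in h; last 2 first.
  - by rewrite posrE ltr0n lt0n.
  - by rewrite posrE.
  have : -1 < - (a%:R / (m%:R : R)).
    rewrite ltrN2 ltr_pdivrMr; last exact: mR.
    by rewrite mul1r ltr_nat.
  move=> /h H; lra.
have -> : (m - a = 0)%N by apply/eqP; rewrite subn_eq0.
rewrite eqxx; have -> : a = m by apply/eqP; rewrite eqn_leq am ge.
rewrite divff; last exact: mR0.
have := @ln_ge0 R m%:R; rewrite ler1n => /(_ m0) H; lra.
Qed.

Lemma ln_ge_half (n : nat) : (2 <= n)%N -> 1 <= 2 * ln (n%:R : R).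
Proof.
move=> n2; have nR : 2 <= (n%:R : R) by rewrite ler_nat.
have n0 : 0 < (n%:R : R) by lra.
have h := @le_ln1Dx R ((n%:R : R)^-1 - 1).
have : -1 < (n%:R : R)^-1 - 1.
  have : 0 < (n%:R : R)^-1 by rewrite invr_gt0.
  move=> H; lra.
move=> /h; rewrite addrC subrK lnV; last by rewrite posrE.
have : (n%:R : R)^-1 <= 2^-1.
  rewrite lef_pV2; [lra | by rewrite posrE | by rewrite posrE; lra].
move=> H3 H4; lra.
Qed.

Lemma dens_facts (A c b N : nat) (D : R) : (0 < A)%N -> (0 < c)%N -> (c <= 2 * A)%N ->
  (c <= N)%N -> (b <= A)%N -> A%:R / c%:R <= D ->
  (b%:R <= D * N%:R) /\ 1 / 2 <= D.
Proof.
move=> A0 c0 cA cN bA le.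
have cR : 0 < (c%:R : R) by rewrite ltr0n.
have AD : (A%:R : R) <= D * c%:R by rewrite -ler_pdivrMr.
have cAR : (c%:R : R) <= 2 * A%:R by rewrite -natrM ler_nat.
have cNR : (c%:R : R) <= N%:R by rewrite ler_nat.
have bAR : (b%:R : R) <= A%:R by rewrite ler_nat.
have AR : 1 <= (A%:R : R) by rewrite ler1n.
have D0 : 0 <= D.
  have : 0 <= (A%:R : R) / c%:R by rewrite divr_ge0 // ler0n.
  move=> H; lra.
split; first by nra.
nra.
Qed.

Lemma per_w (b s N : nat) (D q : R) : 0 <= q -> q ^+ 2 = N%:R ->
  (b%:R <= D * (2 * N)%:R) -> 1 / 2 <= D -> (b <= s * s)%N ->
  b%:R <= 2 * q * D * s%:R.
Proof.
move=> q0 qN bD D2 bs.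
rewrite natrM -qN in bD.
have bsR : (b%:R : R) <= s%:R * s%:R by rewrite -natrM ler_nat.
have s0 : 0 <= (s%:R : R) by rewrite ler0n.
case: (lerP (s%:R) (2 * q * D)) => H.
  have : (s%:R : R) * s%:R <= s%:R * (2 * q * D) by rewrite ler_wpM2l.
  move=> H2; lra.
have : q * (2 * q * D) <= q * s%:R by rewrite ler_wpM2l // ltW.
have qs : 0 <= q * s%:R by rewrite mulr_ge0.
have : q * s%:R <= q * s%:R * (2 * D) by nra.
move=> H1 H2.
have : (b%:R : R) <= q * (2 * q * D).
  have -> : q * (2 * q * D) = D * (2%:R * q ^+ 2) by rewrite expr2; ring.
  exact: bD.
move=> H3; nra.
Qed.

Lemma key_sum (V : finType) (b s : V -> nat) (m OPT : nat) (D q : R) :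
  0 <= q -> 0 <= D -> (m <= \sum_w b w)%N -> (\sum_w s w <= OPT)%N ->
  (forall w, (0 < b w)%N -> (b w)%:R <= 2 * q * D * (s w)%:R) ->
  m%:R <= 2 * q * D * OPT%:R.
Proof.
move=> q0 D0 mb sO H.
have qD : 0 <= 2 * q * D by rewrite mulr_ge0 // mulr_ge0.
apply: (le_trans (y := \sum_w (b w)%:R)).
  by rewrite -natr_sum ler_nat.
apply: (le_trans (y := \sum_w 2 * q * D * (s w)%:R)).
  apply: ler_sum => w _; case: (posnP (b w)) => [->|bp]; last exact: H.
  by rewrite mulr_ge0 // ler0n.
rewrite -mulr_sumr -natr_sum ler_wpM2l //.
by rewrite ler_nat.
Qed.

Lemma step_cost (c a m : nat) (K D : R) : 0 <= K -> D = a%:R / c%:R ->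
  m%:R <= K * D -> (c * m)%:R <= K * a%:R.
Proof.
move=> K0 -> H; rewrite natrM.
case: (posnP c) => [->|c0]; first by rewrite mul0r mulr_ge0 // ler0n.
have cR : 0 < (c%:R : R) by rewrite ltr0n.
have : (c%:R : R) * m%:R <= c%:R * (K * (a%:R / c%:R)) by rewrite ler_wpM2l // ltW.
have -> : (c%:R : R) * (K * (a%:R / c%:R)) = K * a%:R.
  field; by rewrite gt_eqF.
by [].
Qed.

Lemma pot_step (sz sz' c a m m' M0 : nat) (K : R) : 0 <= K ->
  sz%:R <= K * (phi M0 - phi m) -> (sz' <= sz + c)%N -> (m' <= m - a)%N ->
  (a <= m)%N -> (0 < m)%N -> (c * m)%:R <= K * a%:R ->
  sz'%:R <= K * (phi M0 - phi m').
Proof.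
move=> K0 H1 H2 H3 H4 H5 H6.
have mR : 0 < (m%:R : R) by rewrite ltr0n.
have cK : (c%:R : R) <= K * (a%:R / m%:R).
  rewrite mulrA ler_pdivlMr // -natrM; exact: H6.
have Hs := @phi_step m a H5 H4.
have Hm := @phi_mono (m - a) m' H3.
have : K * (a%:R / m%:R) <= K * (phi m - phi (m - a)) by rewrite ler_wpM2l.
have : (sz'%:R : R) <= sz%:R + c%:R by rewrite -natrD ler_nat.
have : K * (phi (m - a)) >= K * phi m' by rewrite ler_wpM2l.
move=> *; nra.
Qed.
End Real.


Lemma card_bigcup_le (T I : finType) (F : I -> {set T}) :
  (#|\bigcup_i F i| <= \sum_i #|F i|)%N.
Proof.
elim/big_rec2: _ => [|i x y _ H]; first by rewrite cards0.
apply: leq_trans (leq_card_setU _ _) _; by rewrite leq_add2l.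
Qed.

Lemma double_count (T : finType) (L : T -> {set T}) :
  (\sum_w #|[set u | w \in L u]| = \sum_u #|L u|)%N.
Proof.
have E1 w : #|[set u | w \in L u]| = (\sum_u (w \in L u))%N.
  by rewrite -sum1_card big_mkcond /=; apply: eq_bigr => u _; rewrite inE; case: (w \in L u).
have E2 u : #|L u| = (\sum_w (w \in L u))%N.
  by rewrite -sum1_card big_mkcond /=; apply: eq_bigr => w _; case: (w \in L u).
rewrite (eq_bigr _ (fun w _ => E1 w)) exchange_big /=.
by apply: eq_bigr => u _; rewrite E2.
Qed.

Section Dir.
Variables (R : realType) (V : finType) (E : rel V) (len : V -> V -> R).

Definition dsize (s : dstate V) := dHL_size (d_Lf s) (d_Lb s).

Lemma dcovered_mono (Lf Lb Lf' Lb' : V -> {set V}) u w :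
  (forall x, Lf x \subset Lf' x) -> (forall x, Lb x \subset Lb' x) ->
  dcovered E len Lf Lb u w -> dcovered E len Lf' Lb' u w.
Proof.
move=> s1 s2 [h [h1 h2 h3]]; exists h; split=> //.
- exact: (subsetP (s1 _)).
- exact: (subsetP (s2 _)).
Qed.

Definition dinv (s : dstate V) := forall v, v \in d_sel s -> forall u w,
  reachable E u w -> on_shortest E len u w v -> dcovered E len (d_Lf s) (d_Lb s) u w.

Lemma in_U Lf Lb p : (p \in d_uncovered E len Lf Lb) =
   reachable E p.1 p.2 && ~~ `[< dcovered E len Lf Lb p.1 p.2 >].
Proof. by rewrite inE. Qed.

Lemma in_A Lf Lb v p : (p \in dcg_arcs E len Lf Lb v) =
   (p \in d_uncovered E len Lf Lb) && `[< on_shortest E len p.1 p.2 v >].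
Proof. by rewrite inE. Qed.

Lemma A_sub_U Lf Lb v : dcg_arcs E len Lf Lb v \subset d_uncovered E len Lf Lb.
Proof. by apply/subsetP => p; rewrite in_A => /andP[]. Qed.

Lemma cX_le Lf Lb v : (#|dcg_X E len Lf Lb v| + #|dcg_Y E len Lf Lb v| <=
   2 * #|dcg_arcs E len Lf Lb v|)%N.
Proof. by rewrite mul2n -addnn leq_add // leq_imset_card. Qed.

Lemma cN_le Lf Lb v : (#|dcg_X E len Lf Lb v| + #|dcg_Y E len Lf Lb v| <=
   2 * #|V|)%N.
Proof. by rewrite mul2n -addnn leq_add // max_card. Qed.

Lemma c_pos Lf Lb v : (0 < #|dcg_arcs E len Lf Lb v|)%N ->
  (0 < #|dcg_X E len Lf Lb v| + #|dcg_Y E len Lf Lb v|)%N.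
Proof.
case/card_gt0P => p pA; rewrite addn_gt0; apply/orP; left.
by apply/card_gt0P; exists p.1; apply/imsetP; exists p.
Qed.

Definition dB (Lf Lb Lf' Lb' : V -> {set V}) w :=
  [set p in d_uncovered E len Lf Lb | [&& w \in Lf' p.1, w \in Lb' p.2 &
     `[< on_shortest E len p.1 p.2 w >]]].

Lemma U_sub_B Lf Lb Lf' Lb' : is_dHL E len Lf' Lb' ->
  d_uncovered E len Lf Lb \subset \bigcup_w dB Lf Lb Lf' Lb' w.
Proof.
move=> HL; apply/subsetP => p pU; have := pU; rewrite in_U => /andP[r _].
have [h [h1 h2 h3]] := HL _ _ r.
apply/bigcupP; exists h => //; rewrite inE pU h1 h2 /=; exact/asboolP.
Qed.

Lemma B_sub_A Lf Lb Lf' Lb' w : dB Lf Lb Lf' Lb' w \subset dcg_arcs E len Lf Lb w.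
Proof.
by apply/subsetP => p; rewrite !inE => /andP[-> /and3P[_ _ ->]].
Qed.

Lemma B_sq Lf Lb Lf' Lb' w : (#|dB Lf Lb Lf' Lb' w| <=
  (#|[set u | w \in Lf' u]| + #|[set u | w \in Lb' u]|) *
  (#|[set u | w \in Lf' u]| + #|[set u | w \in Lb' u]|))%N.
Proof.
apply: leq_trans (_ : #|setX [set u | w \in Lf' u] [set u | w \in Lb' u]| <= _)%N.
  apply: subset_leq_card; apply/subsetP => p; rewrite !inE => /andP[_ /and3P[a b _]].
  by rewrite a b.
by rewrite cardsX leq_mul // ?leq_addr ?leq_addl.
Qed.

Lemma sum_s (Lf' Lb' : V -> {set V}) :
  (\sum_w (#|[set u | w \in Lf' u]| + #|[set u | w \in Lb' u]|) = dHL_size Lf' Lb')%N.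
Proof. by rewrite big_split /= !double_count /dHL_size big_split. Qed.

Section Step.
Variables (s s' : dstate V) (v : V).
Hypotheses (Hv : v \notin d_sel s)
  (Hmax : forall v', v' \notin d_sel s ->
        dcg_density E len (d_Lf s) (d_Lb s) v' <= dcg_density E len (d_Lf s) (d_Lb s) v)
  (Hsel : d_sel s' = v |: d_sel s)
  (HLf : forall u, d_Lf s' u =
        if u \in dcg_X E len (d_Lf s) (d_Lb s) v then v |: d_Lf s u else d_Lf s u)
  (HLb : forall w, d_Lb s' w =
        if w \in dcg_Y E len (d_Lf s) (d_Lb s) v then v |: d_Lb s w else d_Lb s w).

Let A := dcg_arcs E len (d_Lf s) (d_Lb s) v.
Let X := dcg_X E len (d_Lf s) (d_Lb s) v.
Let Y := dcg_Y E len (d_Lf s) (d_Lb s) v.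

Lemma subLf u : d_Lf s u \subset d_Lf s' u.
Proof. by rewrite HLf; case: ifP => _; [apply: subsetUr | apply: subxx]. Qed.
Lemma subLb u : d_Lb s u \subset d_Lb s' u.
Proof. by rewrite HLb; case: ifP => _; [apply: subsetUr | apply: subxx]. Qed.

Lemma A_covered p : p \in A -> dcovered E len (d_Lf s') (d_Lb s') p.1 p.2.
Proof.
move=> pA; have := pA; rewrite in_A => /andP[_ /asboolP sh].
exists v; split=> //.
- by rewrite HLf (_ : p.1 \in X) ?setU11 //; apply/imsetP; exists p.
- by rewrite HLb (_ : p.2 \in Y) ?setU11 //; apply/imsetP; exists p.
Qed.

Lemma U_sub : d_uncovered E len (d_Lf s') (d_Lb s') \subset
   d_uncovered E len (d_Lf s) (d_Lb s) :\: A.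
Proof.
apply/subsetP => p; rewrite in_U => /andP[r /asboolP nc].
rewrite in_setD in_U r /=; apply/andP; split.
- apply/negP => pA; apply: nc; exact: A_covered.
- apply/asboolP => c; apply: nc; apply: dcovered_mono c; [exact: subLf | exact: subLb].
Qed.

Lemma U_card : (#|d_uncovered E len (d_Lf s') (d_Lb s')| <=
   #|d_uncovered E len (d_Lf s) (d_Lb s)| - #|A|)%N.
Proof.
apply: leq_trans (subset_leq_card U_sub) _.
by rewrite cardsD (setIidPr (A_sub_U _ _ _)).
Qed.

Lemma dinv_step : dinv s -> dinv s'.
Proof.
move=> I v'; rewrite Hsel in_setU1 => /orP[/eqP ->|vs] u w r sh.
  case: (boolP `[< dcovered E len (d_Lf s) (d_Lb s) u w >]) => [/asboolP c|nc].
    apply: dcovered_mono c; [exact: subLf | exact: subLb].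
  apply: (@A_covered (u, w)).
  by rewrite in_A in_U /= r nc; apply/asboolP.
apply: dcovered_mono (I v' vs u w r sh); [exact: subLf | exact: subLb].
Qed.

Lemma size_step : (dsize s' <= dsize s + (#|X| + #|Y|))%N.
Proof.
rewrite /dsize /dHL_size.
have ->: (#|X| + #|Y| = \sum_u ((u \in X) + (u \in Y)))%N.
  rewrite big_split /= -!sum1_card !(big_mkcond (fun u => u \in _)) /=.
  by congr (_ + _)%N; apply: eq_bigr => u _; case: (_ \in _).
rewrite -big_split /=; apply: leq_sum => u _.
have H (b : bool) S : (#|if b then v |: S else S| <= #|S| + b)%N.
  by case: b; rewrite ?cardsU1 ?addn0 // addnC leq_add2l leq_b1.
by rewrite HLf HLb addnACA leq_add ?H.
Qed.
Lemma cost_step (Lf' Lb' : V -> {set V}) : dinv s -> is_dHL E len Lf' Lb' ->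
  ((#|X| + #|Y|) * #|d_uncovered E len (d_Lf s) (d_Lb s)|)%:R <=
  (2 * Num.sqrt (#|V|%:R : R) * (dHL_size Lf' Lb')%:R) * #|A|%:R.
Proof.
move=> I HL.
set q : R := Num.sqrt (#|V|%:R : R).
set D := dcg_density E len (d_Lf s) (d_Lb s) v.
have q0 : 0 <= q by apply: sqrtr_ge0.
have K0 : 0 <= 2 * q * (dHL_size Lf' Lb')%:R by rewrite mulr_ge0 ?mulr_ge0 ?ler0n.
apply: step_cost; first exact: K0.
  by rewrite /D /dcg_density.
have D0 : 0 <= D by rewrite /D /dcg_density divr_ge0 ?ler0n.
have -> : 2 * q * (dHL_size Lf' Lb')%:R * D = 2 * q * D * (dHL_size Lf' Lb')%:R.
  by rewrite mulrAC.
apply: (@key_sum R V (fun w => #|dB (d_Lf s) (d_Lb s) Lf' Lb' w|)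
   (fun w => #|[set u | w \in Lf' u]| + #|[set u | w \in Lb' u]|)%N).
- exact: q0.
- exact: D0.
- have H1 := @card_bigcup_le _ _ (fun w => dB (d_Lf s) (d_Lb s) Lf' Lb' w).
  have H2 := subset_leq_card (U_sub_B (d_Lf s) (d_Lb s) Lf' Lb' HL).
  exact: leq_trans H2 H1.
- by rewrite sum_s.
move=> w bp /=.
have wsel : w \notin d_sel s.
  apply/negP => ws; case/card_gt0P: bp => p; rewrite inE => /andP[pU /and3P[_ _ /asboolP sh]].
  move: pU; rewrite in_U => /andP[r /asboolP]; apply; exact: I ws _ _ r sh.
have bA := subset_leq_card (B_sub_A (d_Lf s) (d_Lb s) Lf' Lb' w).
have Ap : (0 < #|dcg_arcs E len (d_Lf s) (d_Lb s) w|)%N by apply: leq_trans bp bA.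
have [bD D2] := @dens_facts R _ _ _ (2 * #|V|)%N D Ap (c_pos _ _ _ Ap) (cX_le _ _ _) (cN_le _ _ _) bA (Hmax w wsel).
apply: (@per_w R _ _ #|V| D q q0 _ bD D2 (B_sq _ _ _ _ _)).
by rewrite sqr_sqrtr ?ler0n.
Qed.

Lemma A_le_U : (#|A| <= #|d_uncovered E len (d_Lf s) (d_Lb s)|)%N.
Proof. exact: subset_leq_card (A_sub_U _ _ _). Qed.

Lemma step_all (Lf' Lb' : V -> {set V}) M0 : dinv s -> is_dHL E len Lf' Lb' ->
  d_uncovered E len (d_Lf s) (d_Lb s) != set0 ->
  dinv s' /\
  ((dsize s)%:R <= (2 * Num.sqrt (#|V|%:R : R) * (dHL_size Lf' Lb')%:R) *
       (phi R M0 - phi R #|d_uncovered E len (d_Lf s) (d_Lb s)|) ->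
   (dsize s')%:R <= (2 * Num.sqrt (#|V|%:R : R) * (dHL_size Lf' Lb')%:R) *
       (phi R M0 - phi R #|d_uncovered E len (d_Lf s') (d_Lb s')|)).
Proof.
move=> I HL ne; split; first exact: dinv_step.
move=> H.
have K0 : 0 <= 2 * Num.sqrt (#|V|%:R : R) * (dHL_size Lf' Lb')%:R.
  by rewrite mulr_ge0 ?mulr_ge0 ?sqrtr_ge0 ?ler0n.
have m0 : (0 < #|d_uncovered E len (d_Lf s) (d_Lb s)|)%N by rewrite card_gt0.
have P1 := @pot_step R (dsize s) (dsize s') _ _ _ _ M0 _ K0 H.
apply: P1.
- exact: size_step.
- exact: U_card.
- exact: A_le_U.
- exact: m0.
- exact: (cost_step Lf' Lb' I HL).
Qed.
End Step.

Lemma d_reach_bound (Lf' Lb' : V -> {set V}) : is_dHL E len Lf' Lb' ->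
  forall st, d_reach E len st -> dinv st /\
  (dsize st)%:R <= (2 * Num.sqrt (#|V|%:R : R) * (dHL_size Lf' Lb')%:R) *
    (phi R #|d_uncovered E len (fun _ => set0) (fun _ => set0)|
     - phi R #|d_uncovered E len (d_Lf st) (d_Lb st)|).
Proof.
move=> HL st; elim=> [|s s' _ [I H] [ne [v [Hv Hmax Hsel HLf HLb]]]].
  split; first by move=> v; rewrite in_set0.
  rewrite /dsize /dHL_size big1 /=; last by move=> u _; rewrite cards0.
  by rewrite subrr mulr0.
have [I' H'] := @step_all s s' v Hmax Hsel HLf HLb Lf' Lb'
  #|d_uncovered E len (fun _ => set0) (fun _ => set0)| I HL ne.
by split; [exact: I' | exact: H'].
Qed.

Lemma final_real (sz M0 n OPT : nat) (q : R) : (2 <= n)%N -> (M0 <= n * n)%N -> 0 <= q ->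
  sz%:R <= (2 * q * OPT%:R) * (phi R M0 - phi R 0) ->
  sz%:R <= 8 * q * ln (n%:R : R) * OPT%:R.
Proof.
move=> n2 Mn q0 H.
have ph0 : phi R 0 = 0 by rewrite /phi eqxx.
rewrite ph0 subr0 in H.
have K0 : 0 <= 2 * q * OPT%:R by rewrite mulr_ge0 ?mulr_ge0 ?ler0n.
have hl := @ln_ge_half R n n2.
have P : phi R M0 <= 4 * ln (n%:R : R).
  apply: le_trans (@phi_mono R _ _ Mn) _.
  rewrite /phi muln_eq0 orbb (negbTE (lt0n_neq0 (leq_trans _ n2))) //.
  rewrite natrM lnM; last 2 first.
  - by rewrite posrE ltr0n (leq_trans _ n2).
  - by rewrite posrE ltr0n (leq_trans _ n2).
  lra.
apply: le_trans H _.
have -> : 8 * q * ln (n%:R : R) * OPT%:R = (2 * q * OPT%:R) * (4 * ln n%:R).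
  by ring.
by rewrite ler_wpM2l.
Qed.

Lemma dir_main : (2 <= #|V|)%N -> directed_ok E len ->
  forall Lf Lb : V -> {set V}, whhl_output E len Lf Lb ->
  forall Lf' Lb' : V -> {set V}, is_dHL E len Lf' Lb' ->
  (dHL_size Lf Lb)%:R <=
    8 * Num.sqrt (#|V|%:R : R) * ln (#|V|%:R : R) * (dHL_size Lf' Lb')%:R.
Proof.
move=> n2 _ Lf Lb [S [Hr HU]] Lf' Lb' HL.
have [_ H] := d_reach_bound Lf' Lb' HL _ Hr.
rewrite /= HU cards0 in H.
apply: (final_real _ _ _ _ _ n2 _ (sqrtr_ge0 _) H).
apply: leq_trans (max_card _) _; by rewrite card_prod.
Qed.
End Dir.


Lemma card_bigcup_leP (T I : finType) (P : pred I) (F : I -> {set T}) :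
  (#|\bigcup_(i | P i) F i| <= \sum_(i | P i) #|F i|)%N.
Proof.
elim/big_rec2: _ => [|i x y _ H]; first by rewrite cards0.
apply: leq_trans (leq_card_setU _ _) _; by rewrite leq_add2l.
Qed.

Lemma last_rev_belast (T : Type) (x : T) p : last (last x p) (rev (belast x p)) = x.
Proof.
have e : last x p :: rev (belast x p) = rev (x :: p) by rewrite [in RHS]lastI rev_rcons.
by rewrite -[last (last x p) _]/(last x (last x p :: rev (belast x p))) e rev_cons last_rcons.
Qed.

Section Rev.
Variables (R : realType) (V : finType) (E : rel V) (len : V -> V -> R).
Hypotheses (Esym : symmetric E) (lsym : forall u w, len u w = len w u).

Lemma walk_len_cons u x p : walk_len len u (x :: p) = len u x + walk_len len x p.
Proof. by rewrite /walk_len /= big_cons. Qed.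

Lemma walk_len_rcons u q b :
  walk_len len u (rcons q b) = walk_len len u q + len (last u q) b.
Proof.
elim: q u => [|x q IH] u /=.
  by rewrite /walk_len /= !big_cons !big_nil addr0 add0r.
by rewrite !walk_len_cons IH addrA.
Qed.

Lemma walk_len_rev u p : walk_len len (last u p) (rev (belast u p)) = walk_len len u p.
Proof.
elim: p u => [|x p IH] u; first by [].
rewrite /= rev_cons walk_len_rcons IH last_rev_belast walk_len_cons lsym addrC.
by [].
Qed.

Lemma walk_rev u w p : walk E u w p -> walk E w u (rev (belast u p)).
Proof.
case/andP => pa /eqP <-; apply/andP; split; last by rewrite last_rev_belast.
rewrite rev_path; apply: sub_path pa => x y; by rewrite Esym.
Qed.

Lemma on_shortest_sym u w h : on_shortest E len u w h -> on_shortest E len w u h.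
Proof.
case=> p [[wp sp] hp]; exists (rev (belast u p)); split; first split.
- exact: walk_rev.
- move=> r wr.
  have lw : last u p = w by case/andP: wp => _ /eqP.
  have lr : last w r = u by case/andP: wr => _ /eqP.
  have := walk_len_rev u p; rewrite lw => ->.
  have := walk_len_rev w r; rewrite lr => <-.
  apply: sp; exact: walk_rev.
- have lw : last u p = w by case/andP: wp => _ /eqP.
  by rewrite -lw -rev_rcons -lastI mem_rev.
Qed.
End Rev.

Lemma pair_eq (T : finType) (u w u2 w2 : T) : [set u; w] = [set u2; w2] ->
  (u2 = u /\ w2 = w) \/ (u2 = w /\ w2 = u).
Proof.
move=> e.
have h1 : u2 \in [set u; w] by rewrite e set21.
have h2 : w2 \in [set u; w] by rewrite e set22.
have h3 : u \in [set u2; w2] by rewrite -e set21.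
have h4 : w \in [set u2; w2] by rewrite -e set22.
move: h1 h2 h3 h4; rewrite !in_set2.
case/orP => /eqP ->; case/orP => /eqP -> => h3 h4;
  first [by left | by right | (case/orP: h4 => /eqP ->; by [left | right]) | (case/orP: h3 => /eqP ->; by [left | right])].
Qed.

Section Und.
Variables (R : realType) (V : finType) (E : rel V) (len : V -> V -> R).
Hypothesis Hok : undirected_ok E len.

Lemma os_set u w u2 w2 h : [set u; w] = [set u2; w2] ->
  on_shortest E len u w h -> on_shortest E len u2 w2 h.
Proof.
case: Hok => Es [_ [ls _]] e sh.
case: (pair_eq _ _ _ _ _ e) => [[-> ->]|[-> ->]]; first exact: sh.
exact: (@on_shortest_sym R V E len Es ls _ _ _ sh).
Qed.

Definition usize (s : ustate V) := uHL_size (u_L s).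

Lemma ucovered_mono (L L' : V -> {set V}) u w :
  (forall x, L x \subset L' x) -> ucovered E len L u w -> ucovered E len L' u w.
Proof.
move=> s1 [h [h1 h2 h3]]; exists h; split=> //; exact: (subsetP (s1 _)).
Qed.

Definition uinv (s : ustate V) := forall v, v \in u_sel s -> forall u w,
  reachable E u w -> on_shortest E len u w v -> ucovered E len (u_L s) u w.

Lemma in_uU L e : (e \in u_uncovered E len L) <->
  exists u w, [/\ e = [set u; w], reachable E u w & ~ ucovered E len L u w].
Proof. by rewrite inE; split => /asboolP. Qed.

Lemma in_uA L v e : (e \in ucg_edges E len L v) <->
  e \in u_uncovered E len L /\ exists u w, e = [set u; w] /\ on_shortest E len u w v.
Proof. by rewrite inE; split => [/andP[a /asboolP b]|[a b]] //; rewrite a; apply/asboolP. Qed.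

Lemma uA_sub_U L v : ucg_edges E len L v \subset u_uncovered E len L.
Proof. by apply/subsetP => e /in_uA []. Qed.

Lemma uc_le2 L v : (#|ucg_verts E len L v| <= 2 * #|ucg_edges E len L v|)%N.
Proof.
apply: leq_trans (@card_bigcup_leP _ _ _ _) _.
rewrite -sum1_card big_distrr /=; apply: leq_sum => e /in_uA [_ [u [w [-> _]]]].
by rewrite cards2 muln1; case: (u != w).
Qed.

Lemma ucN_le L v : (#|ucg_verts E len L v| <= 2 * #|V|)%N.
Proof. by apply: leq_trans (max_card _) _; rewrite leq_pmull. Qed.

Lemma uc_pos L v : (0 < #|ucg_edges E len L v|)%N -> (0 < #|ucg_verts E len L v|)%N.
Proof.
case/card_gt0P => e eA; have := eA; case/in_uA => _ [u [w [ee _]]].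
apply/card_gt0P; exists u; apply/bigcupP; exists e => //; by rewrite ee set21.
Qed.

Definition uB (L L' : V -> {set V}) w :=
  [set e in u_uncovered E len L | `[< exists u w', e = [set u; w'] /\
     [/\ w \in L' u, w \in L' w' & on_shortest E len u w' w] >]].

Lemma uU_sub_B L L' : is_uHL E len L' ->
  u_uncovered E len L \subset \bigcup_w uB L L' w.
Proof.
move=> HL; apply/subsetP => e eU; have := eU; case/in_uU => u [w [ee r _]].
have [h [h1 h2 h3]] := HL _ _ r.
apply/bigcupP; exists h => //; rewrite inE eU /=; apply/asboolP.
by exists u, w.
Qed.

Lemma uB_sub_A L L' w : uB L L' w \subset ucg_edges E len L w.
Proof.
apply/subsetP => e; rewrite inE => /andP[eU /asboolP [u [w' [ee [_ _ sh]]]]].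
by apply/in_uA; split => //; exists u, w'.
Qed.

Lemma uB_sq L L' w : (#|uB L L' w| <=
  #|[set u | w \in L' u]| * #|[set u | w \in L' u]|)%N.
Proof.
set S := [set u | w \in L' u].
apply: leq_trans (_ : #|[set [set x.1; x.2] | x in setX S S]| <= _)%N.
  apply: subset_leq_card; apply/subsetP => e; rewrite inE => /andP[_ /asboolP [u [w' [ee [a b _]]]]].
  apply/imsetP; exists (u, w'); last by [].
  by rewrite !inE a b.
by rewrite -cardsX leq_imset_card.
Qed.

Lemma usum_s (L' : V -> {set V}) :
  (\sum_w #|[set u | w \in L' u]| = uHL_size L')%N.
Proof. by rewrite double_count. Qed.

Section Step.
Variables (s s' : ustate V) (v : V).
Hypotheses
  (Hmax : forall v', v' \notin u_sel s ->
        ucg_density E len (u_L s) v' <= ucg_density E len (u_L s) v)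
  (Hsel : u_sel s' = v |: u_sel s)
  (HL : forall u, u_L s' u =
        if u \in ucg_verts E len (u_L s) v then v |: u_L s u else u_L s u).

Let A := ucg_edges E len (u_L s) v.
Let Vs := ucg_verts E len (u_L s) v.

Lemma usubL u : u_L s u \subset u_L s' u.
Proof. by rewrite HL; case: ifP => _; [apply: subsetUr | apply: subxx]. Qed.

Lemma uA_covered e : e \in A -> forall u2 w2, e = [set u2; w2] ->
  ucovered E len (u_L s') u2 w2.
Proof.
move=> eA u2 w2 e2; have := eA; case/in_uA => _ [u [w [e1 sh]]].
have sh2 : on_shortest E len u2 w2 v by apply: os_set sh; rewrite -e1 -e2.
have inV x : x \in e -> v \in u_L s' x.
  move=> xe; rewrite HL (_ : x \in Vs); first by rewrite setU11.
  by apply/bigcupP; exists e.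
by exists v; split=> //; apply: inV; rewrite e2 ?set21 ?set22.
Qed.

Lemma uU_sub : u_uncovered E len (u_L s') \subset u_uncovered E len (u_L s) :\: A.
Proof.
apply/subsetP => e eU; have := eU; case/in_uU => u2 [w2 [e2 r nc]].
rewrite in_setD; apply/andP; split.
- apply/negP => eA; apply: nc; exact: uA_covered eA _ _ e2.
- apply/in_uU; exists u2, w2; split=> // c; apply: nc.
  apply: ucovered_mono c; exact: usubL.
Qed.

Lemma uU_card : (#|u_uncovered E len (u_L s')| <= #|u_uncovered E len (u_L s)| - #|A|)%N.
Proof.
apply: leq_trans (subset_leq_card uU_sub) _.
by rewrite cardsD (setIidPr (uA_sub_U _ _)).
Qed.

Lemma uinv_step : uinv s -> uinv s'.
Proof.
move=> I v'; rewrite Hsel in_setU1 => /orP[/eqP ->|vs] u w r sh.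
  case: (pselect (ucovered E len (u_L s) u w)) => [c|nc].
    apply: ucovered_mono c; exact: usubL.
  apply: (@uA_covered [set u; w]) => //.
  apply/in_uA; split; last by exists u, w.
  by apply/in_uU; exists u, w.
apply: ucovered_mono (I v' vs u w r sh); exact: usubL.
Qed.

Lemma usize_step : (usize s' <= usize s + #|Vs|)%N.
Proof.
rewrite /usize /uHL_size.
have ->: (#|Vs| = \sum_u (u \in Vs))%N.
  by rewrite -sum1_card big_mkcond /=; apply: eq_bigr => u _; case: (_ \in _).
rewrite -big_split /=; apply: leq_sum => u _.
rewrite HL; case: (u \in Vs); first by rewrite cardsU1 addnC leq_add2l leq_b1.
by rewrite addn0.
Qed.

Lemma ucost_step (L' : V -> {set V}) : uinv s -> is_uHL E len L' ->
  (#|Vs| * #|u_uncovered E len (u_L s)|)%:R <=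
  (2 * Num.sqrt (#|V|%:R : R) * (uHL_size L')%:R) * #|A|%:R.
Proof.
move=> I HL'.
set q : R := Num.sqrt (#|V|%:R : R).
set D := ucg_density E len (u_L s) v.
have q0 : 0 <= q by apply: sqrtr_ge0.
have K0 : 0 <= 2 * q * (uHL_size L')%:R by rewrite mulr_ge0 ?mulr_ge0 ?ler0n.
apply: step_cost; first exact: K0.
  by rewrite /D /ucg_density.
have D0 : 0 <= D by rewrite /D /ucg_density divr_ge0 ?ler0n.
have -> : 2 * q * (uHL_size L')%:R * D = 2 * q * D * (uHL_size L')%:R.
  by rewrite mulrAC.
apply: (@key_sum R V (fun w => #|uB (u_L s) L' w|)
   (fun w => #|[set u | w \in L' u]|)).
- exact: q0.
- exact: D0.
- have H1 := @card_bigcup_le _ _ (fun w => uB (u_L s) L' w).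
  have H2 := subset_leq_card (uU_sub_B (u_L s) L' HL').
  exact: leq_trans H2 H1.
- by rewrite usum_s.
move=> w bp /=.
have wsel : w \notin u_sel s.
  apply/negP => ws; case/card_gt0P: bp => e; rewrite inE => /andP[eU /asboolP [u [w' [ee [_ _ sh]]]]].
  move: eU; case/in_uU => u2 [w2 [e2 r nc]]; apply: nc.
  apply: I ws _ _ r _; apply: os_set sh; by rewrite -ee -e2.
have bA := subset_leq_card (uB_sub_A (u_L s) L' w).
have Ap : (0 < #|ucg_edges E len (u_L s) w|)%N by apply: leq_trans bp bA.
have [bD D2] := @dens_facts R _ _ _ (2 * #|V|)%N D Ap (uc_pos _ _ Ap) (uc_le2 _ _) (ucN_le _ _) bA (Hmax w wsel).
apply: (@per_w R _ _ #|V| D q q0 _ bD D2 (uB_sq _ _ _)).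
by rewrite sqr_sqrtr ?ler0n.
Qed.

Lemma ustep_all (L' : V -> {set V}) M0 : uinv s -> is_uHL E len L' ->
  u_uncovered E len (u_L s) != set0 ->
  uinv s' /\
  ((usize s)%:R <= (2 * Num.sqrt (#|V|%:R : R) * (uHL_size L')%:R) *
       (phi R M0 - phi R #|u_uncovered E len (u_L s)|) ->
   (usize s')%:R <= (2 * Num.sqrt (#|V|%:R : R) * (uHL_size L')%:R) *
       (phi R M0 - phi R #|u_uncovered E len (u_L s')|)).
Proof.
move=> I HL' ne; split; first exact: uinv_step.
move=> H.
have K0 : 0 <= 2 * Num.sqrt (#|V|%:R : R) * (uHL_size L')%:R.
  by rewrite mulr_ge0 ?mulr_ge0 ?sqrtr_ge0 ?ler0n.
have m0 : (0 < #|u_uncovered E len (u_L s)|)%N by rewrite card_gt0.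
have P1 := @pot_step R (usize s) (usize s') _ _ _ _ M0 _ K0 H.
apply: P1.
- exact: usize_step.
- exact: uU_card.
- exact: subset_leq_card (uA_sub_U _ _).
- exact: m0.
- exact: (ucost_step L' I HL').
Qed.
End Step.

Lemma u_reach_bound (L' : V -> {set V}) : is_uHL E len L' ->
  forall st, u_reach E len st -> uinv st /\
  (usize st)%:R <= (2 * Num.sqrt (#|V|%:R : R) * (uHL_size L')%:R) *
    (phi R #|u_uncovered E len (fun _ => set0)|
     - phi R #|u_uncovered E len (u_L st)|).
Proof.
move=> HL' st; elim=> [|s s' _ [I H] [ne [v [Hv Hmax Hsel HL]]]].
  split; first by move=> v; rewrite in_set0.
  rewrite /usize /uHL_size big1 /=; last by move=> u _; rewrite cards0.
  by rewrite subrr mulr0.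
have [I' H'] := @ustep_all s s' v Hmax Hsel HL L'
  #|u_uncovered E len (fun _ => set0)| I HL' ne.
by split; [exact: I' | exact: H'].
Qed.
End Und.

Lemma und_main (R : realType) (V : finType) (E : rel V) (len : V -> V -> R) :
  (2 <= #|V|)%N -> undirected_ok E len ->
  forall L : V -> {set V}, whhl_output_u E len L ->
  forall L' : V -> {set V}, is_uHL E len L' ->
  (uHL_size L)%:R <=
    8 * Num.sqrt (#|V|%:R : R) * ln (#|V|%:R : R) * (uHL_size L')%:R.
Proof.
move=> n2 Hok L [S [Hr HU]] L' HL.
have [_ H] := @u_reach_bound R V E len Hok L' HL _ Hr.
rewrite /= HU cards0 in H.
apply: (@final_real R _ _ _ _ _ n2 _ (sqrtr_ge0 _) H).
apply: leq_trans (_ : #|[set [set x.1; x.2] | x in [set: V * V]]| <= _)%N.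
  apply: subset_leq_card; apply/subsetP => e; case/in_uU => u [w [-> _ _]].
  by apply/imsetP; exists (u, w).
by apply: leq_trans (leq_imset_card _ _) _; rewrite cardsT card_prod.
Qed.


Theorem mainTheorem6 (R : realType) :
  exists (C : R) (n0 : nat),
    (forall (V : finType) (E : rel V) (len : V -> V -> R),
       (n0 <= #|V|)%N -> directed_ok E len ->
       forall Lf Lb : V -> {set V}, whhl_output E len Lf Lb ->
       forall Lf' Lb' : V -> {set V}, is_dHL E len Lf' Lb' ->
         (dHL_size Lf Lb)%:R <=
           C * Num.sqrt (#|V|%:R) * ln (#|V|%:R) * (dHL_size Lf' Lb')%:R)
    /\
    (forall (V : finType) (E : rel V) (len : V -> V -> R),
       (n0 <= #|V|)%N -> undirected_ok E len ->
       forall L : V -> {set V}, whhl_output_u E len L ->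
       forall L' : V -> {set V}, is_uHL E len L' ->
         (uHL_size L)%:R <=
           C * Num.sqrt (#|V|%:R) * ln (#|V|%:R) * (uHL_size L')%:R).
Proof.
exists 8, 2%N; split.
- move=> V E len n2 ok Lf Lb Ho Lf' Lb' HL.
  exact: (@dir_main R V E len n2 ok Lf Lb Ho Lf' Lb' HL).
- move=> V E len n2 ok L Ho L' HL.
  exact: (@und_main R V E len n2 ok L Ho L' HL).
Qed.
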